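(* Let $r,c\in\mathbb{N}$, $n=r+c$, $N=2^n$, and $X=(X_1,X_2)$ with $X_1\subset\{0,1\}^n$ the strings ending in $0^c$ and $X_2\subset\{0,1\}^n$ the strings beginning with $0^r$. Consider two distributions on pairs $(\varphi,y)\in S_N\times\{0,1\}^r$: $\mathcal D_1$: sample $\varphi\sim S_N$ uniformly, sample $x\sim\{0,1\}^r$ uniformly, let $y=\mathsf{Sp}^{\varphi}(x)$, output $(\varphi,y)$. $\mathcal D_2$: sample $y\sim\{0,1\}^r$ uniformly, sample $\pi\sim\mathcal D_X$, output $(\varphi,y)$ with $\varphi=\mathsf{XOR}_{y\|0^c}\circ\pi$. Then $\mathcal D_1$ and $\mathcal D_2$ are identical distributions.
   Context: Permutations of $\{0,1\}^n$ are identified with $S_N$. $\mathsf{Sp}^{\varphi}(x)$ is the first $r$ bits of $\varphi(x\|0^c)$. $\mathsf{XOR}_{y\|0^c}$ is the permutation of $\{0,1\}^n$ given by $(a\|b)\mapsto (a\oplus y)\|b$ for $a\in\{0,1\}^r$, $b\in\{0,1\}^c$. For $\pi\in S_N$, $X_\pi=\{(i,j): i\in X_1,\ j\in X_2,\ \pi(i)=j\}$; the distribution $\mathcal D_X$ on $S_N$ is $\Pr_{\Pi\sim\mathcal D_X}[\Pi=\pi]=|X_\pi|/\sum_{\sigma\in S_N}|X_\sigma|$. *)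

(* Defs.v *)
From mathcomp Require Import all_boot all_order all_algebra all_fingroup.
Set Implicit Arguments. Unset Strict Implicit. Unset Printing Implicit Defensive.
Import GRing.Theory Num.Theory.
Local Open Scope ring_scope.

Definition bits (n : nat) := {ffun 'I_n -> bool}.

Section Sponge.
Variables r c : nat.
Notation W := (bits (r + c)).

Definition concat (a : bits r) (b : bits c) : W :=
  [ffun i => match split i with inl j => a j | inr k => b k end].

Definition zeros (m : nat) : bits m := [ffun => false].

Definition first_r (w : W) : bits r := [ffun j => w (lshift c j)].

Definition Sp (phi : {perm W}) (x : bits r) : bits r :=
  first_r (phi (concat x (zeros c))).

Definition xorf (y : bits r) (w : W) : W :=
  [ffun i => match split i with inl j => w i (+) y j | inr _ => w i end].

Lemma xorfK y : involutive (xorf y).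
Proof.
move=> w; apply/ffunP=> i; rewrite !ffunE.
by case: split => [j|k] //; rewrite addbK.
Qed.

Definition XOR (y : bits r) : {perm W} := perm (can_inj (xorfK y)).

Definition X1 : {set W} := [set w : W | [forall k : 'I_c, ~~ w (rshift r k)]].
Definition X2 : {set W} := [set w : W | [forall j : 'I_r, ~~ w (lshift c j)]].

Definition Xpi (pi : {perm W}) : {set W * W} :=
  [set p : W * W | (p.1 \in X1) && (p.2 \in X2) && (pi p.1 == p.2)].

Definition DX (pi : {perm W}) : rat :=
  #|Xpi pi|%:R / (\sum_(s : {perm W}) #|Xpi s|)%:R.

Definition unif (T : finType) (t : T) : rat := 1 / #|T|%:R.

Definition push (A B : finType) (mu : A -> rat) (f : A -> B) (b : B) : rat :=
  \sum_(a | f a == b) mu a.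

Definition D1 : {perm W} * bits r -> rat :=
  push (fun a : {perm W} * bits r => unif a.1 * unif a.2)
       (fun a => (a.1, Sp a.1 a.2)).

(* D_2 : y uniform, pi ~ D_X, output (XOR_{y||0^c} o pi, y) *)
Definition D2 : {perm W} * bits r -> rat :=
  push (fun a : bits r * {perm W} => unif a.1 * DX a.2)
       (fun a => ((a.2 * XOR a.1)%g, a.1)).

End Sponge.

(* Main.v *)
Require Import Defs.
From mathcomp Require Import all_boot all_order all_algebra all_fingroup.
Set Implicit Arguments. Unset Strict Implicit. Unset Printing Implicit Defensive.
Import GRing.Theory Num.Theory.

From mathcomp Require Import ring.
Section P.
Variable T : finType.

Lemma permcnt_le (a b b' : T) :
  #|[set s : {perm T} | s a == b]| <= #|[set s : {perm T} | s a == b']|.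
Proof.
rewrite -(card_imset _ (mulIg (tperm b b'))).
apply: subset_leq_card; apply/subsetP=> s' /imsetP[s]; rewrite !inE => /eqP Hs ->.
by rewrite permM Hs tpermL.
Qed.

Lemma permcnt (a b b' : T) :
  #|[set s : {perm T} | s a == b]| = #|[set s : {perm T} | s a == b']|.
Proof. by apply/eqP; rewrite eqn_leq !permcnt_le. Qed.

Lemma permcnt_tot (a b : T) :
  #|T| * #|[set s : {perm T} | s a == b]| = #|{perm T}|.
Proof.
transitivity (\sum_(s : {perm T}) 1)%N; last by rewrite sum1_card.
rewrite (partition_big (fun s : {perm T} => s a) predT) //=.
rewrite -sum_nat_const; apply: eq_bigr => b' _; rewrite (permcnt a b b') -sum1_card.
by apply: eq_bigl => s; rewrite inE.
Qed.
Lemma card_cond (U : finType) (A : {set U}) (P : pred U) :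
  #|[set p | (p \in A) && P p]| = (\sum_(p in A) P p)%N.
Proof.
rewrite -sum1_card big_mkcond /= [RHS]big_mkcond /=.
by apply: eq_bigr => p _; rewrite !inE; case: (p \in A); case: (P p).
Qed.

Lemma sumS (A B : {set T}) : 0 < #|T| -> #|A| * #|B| = #|T| ->
  (\sum_(s : {perm T}) #|[set p : T * T | (p.1 \in A) && (p.2 \in B) && (s p.1 == p.2)]|)%N
  = #|{perm T}|.
Proof.
move=> T0 AB.
have E s : #|[set p : T * T | (p.1 \in A) && (p.2 \in B) && (s p.1 == p.2)]|
   = (\sum_(p in setX A B) (s p.1 == p.2))%N.
  rewrite -card_cond; apply: eq_card => p; by rewrite !inE.
under eq_bigr => s _ do rewrite E.
rewrite exchange_big /=.
have F (p : T * T) : (\sum_(s : {perm T}) (s p.1 == p.2))%N = #|[set s : {perm T} | s p.1 == p.2]|.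
  rewrite -sum1_card [RHS]big_mkcond /=; apply: eq_bigr => s _.
  by rewrite inE; case: eqP.
under eq_bigr => p _ do rewrite F.
apply/eqP; rewrite -(eqn_pmul2l T0); apply/eqP.
rewrite big_distrr /=.
under eq_bigr => p _ do rewrite permcnt_tot.
by rewrite sum_nat_const cardsX AB.
Qed.
End P.
Section S.
Variables r c : nat.
Notation W := (bits (r + c)).

Lemma split_l (j : 'I_r) : split (lshift c j) = inl j.
Proof. exact: (unsplitK (inl j)). Qed.
Lemma split_r (k : 'I_c) : split (rshift r k) = inr k.
Proof. exact: (unsplitK (inr k)). Qed.

Lemma concat_l (a : bits r) b j : concat a b (lshift c j) = a j.
Proof. by rewrite ffunE split_l. Qed.
Lemma concat_r (a : bits r) (b : bits c) k : concat a b (rshift r k) = b k.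
Proof. by rewrite ffunE split_r. Qed.

Lemma concat_inj0 : injective (fun x : bits r => concat x (zeros c)).
Proof. move=> x x' /ffunP H; apply/ffunP=> j; by rewrite -!(concat_l _ (zeros c)) H. Qed.

Lemma concat_inj1 : injective (fun x : bits c => concat (zeros r) x).
Proof. move=> x x' /ffunP H; apply/ffunP=> j; by rewrite -!(concat_r (zeros r)) H. Qed.

Lemma ffun_split (w w' : W) :
  (forall j, w (lshift c j) = w' (lshift c j)) ->
  (forall k, w (rshift r k) = w' (rshift r k)) -> w = w'.
Proof.
move=> Hl Hr; apply/ffunP=> i; rewrite -[i]splitK; case: (split i) => [j|k] /=.
  exact: Hl. exact: Hr.
Qed.

Lemma X1E : X1 r c = [set concat x (zeros c) | x : bits r].
Proof.
apply/setP=> w; rewrite inE; apply/forallP/imsetP => [H|[x _ ->] k].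
  exists (first_r w) => //; apply: ffun_split => [j|k].
    by rewrite concat_l ffunE.
  by rewrite concat_r ffunE; apply/negbTE.
by rewrite concat_r ffunE.
Qed.

Lemma X2E : X2 r c = [set concat (zeros r) x | x : bits c].
Proof.
apply/setP=> w; rewrite inE; apply/forallP/imsetP => [H|[x _ ->] k].
  exists [ffun k => w (rshift r k)] => //; apply: ffun_split => [j|k].
    by rewrite concat_l ffunE; apply/negbTE.
  by rewrite concat_r ffunE.
by rewrite concat_l ffunE.
Qed.

Lemma card_bits m : #|bits m| = 2 ^ m.
Proof. by rewrite card_ffun card_bool card_ord. Qed.

Lemma cardX12 : #|X1 r c| * #|X2 r c| = #|W|.
Proof.
rewrite X1E X2E !card_imset; [|exact: concat_inj1|exact: concat_inj0].
by rewrite !card_bits expnD.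
Qed.

Lemma XORV (y : bits r) : (XOR c y)^-1%g = XOR c y.
Proof.
apply: (mulgI (XOR c y)); rewrite mulgV; apply/permP=> w.
by rewrite permM !permE /= xorfK.
Qed.
Lemma inX2_xor (y : bits r) (v : W) : (xorf y v \in X2 r c) = (first_r v == y).
Proof.
rewrite inE; apply/forallP/eqP => [H|<- j].
  apply/ffunP=> j; rewrite ffunE; have := H j; rewrite ffunE split_l.
  by case: (v _); case: (y j).
by rewrite ffunE split_l ffunE addbb.
Qed.

Lemma cardXpi (phi : {perm W}) (y : bits r) :
  #|Xpi (phi * XOR c y)%g| = #|[set x : bits r | Sp phi x == y]|.
Proof.
have inj : injective (fun x : bits r => (concat x (zeros c), (phi * XOR c y)%g (concat x (zeros c)))).
  by move=> x x' [] /concat_inj0.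
rewrite -(card_imset _ inj); apply: eq_card => -[w w'].
rewrite in_set /=; apply/idP/imsetP.
  case/andP=> /andP[]; rewrite X1E => /imsetP[x _ ->] H2 /eqP E; subst w'.
  exists x => //; rewrite inE; move: H2; by rewrite permM [XOR c y _]permE inX2_xor.
case=> x; rewrite inE => Hx [-> ->]; rewrite eqxx andbT; apply/andP; split.
  by rewrite X1E; apply/imsetP; exists x.
by rewrite permM [XOR c y _]permE inX2_xor.
Qed.

Lemma cardD1 (phi : {perm W}) (y : bits r) :
  #|[pred a : {perm W} * bits r | (a.1, Sp a.1 a.2) == (phi, y)]|
  = #|[set x : bits r | Sp phi x == y]|.
Proof.
have inj : injective (fun x : bits r => (phi, x)) by move=> x x' [].
rewrite -(card_imset _ inj); apply: eq_card => -[s x]; rewrite !inE /= xpair_eqE.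
apply/andP/imsetP => [[/eqP -> H]|[x']]; first by exists x; rewrite ?inE.
by rewrite inE => H [-> ->].
Qed.
End S.

Theorem lemma5 (r c : nat) :
  forall z : {perm bits (r + c)} * bits r, D1 z = D2 z.
Proof.
move=> [phi y].
rewrite /D1 /D2 /push /unif sumr_const cardD1.
rewrite (big_pred1 (y, (phi * XOR c y)%g)); last first.
  move=> [y' s] /=; rewrite /= !xpair_eqE.
  rewrite andbC; case: (y' =P y) => //= ->.
  apply/eqP/eqP => [<-|->]; first by rewrite -mulgA -{2}XORV mulgV mulg1.
  by rewrite -mulgA -{1}XORV mulVg mulg1.
rewrite /= /DX cardXpi sumS; last first.
- exact: cardX12.
- by rewrite card_bits expn_gt0.
rewrite -mulr_natr; ring.
Qed.
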